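(* Let $\mathcal{X}$ be a finite set and $P_X$ a probability mass function on $\mathcal{X}$ with $P_X(x)>0$ for all $x\in\mathcal{X}$. For every guessing function $G$ on $\mathcal{X}$, every $\rho>0$ and every $q\in\mathbb{R}$, $$ E_q[G(X)^\rho] \;\geq\; (1+\ln|\mathcal{X}|)^{-\rho}\,\frac{\left[\sum_{x\in\mathcal{X}}P_X(x)^{\frac{q}{1+\rho}}\right]^{1+\rho}}{\sum_{x\in\mathcal{X}}P_X(x)^q}. $$
   Context: A guessing function on a finite set $\mathcal{X}$ is a bijection $G:\mathcal{X}\to\{1,2,\dots,|\mathcal{X}|\}$ ($G(x)$ is the number of guesses needed when $X=x$). For $q\in\mathbb{R}$ and a function $F$ on $\mathcal{X}$, the $q$-normalized expectation under $P_X$ is $E_q[F(X)]=\frac{\sum_{x\in\mathcal{X}}F(x)P_X(x)^q}{\sum_{x\in\mathcal{X}}P_X(x)^q}$. *)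

(* Defs.v *)
From Stdlib Require Import Reals Lra Lia.
Open Scope R_scope.

(* The finite set X is modelled as {0, ..., n-1}. *)
Fixpoint sumR (n : nat) (f : nat -> R) : R :=
  match n with
  | O => 0
  | S m => sumR m f + f m
  end.

Definition pmf_pos (n : nat) (P : nat -> R) : Prop :=
  (forall x, (x < n)%nat -> 0 < P x) /\ sumR n P = 1.

Definition guessing_function (n : nat) (G : nat -> nat) : Prop :=
  (forall x, (x < n)%nat -> (1 <= G x <= n)%nat) /\
  (forall x y, (x < n)%nat -> (y < n)%nat -> G x = G y -> x = y).

Definition Eq_norm (n : nat) (P : nat -> R) (q : R) (F : nat -> R) : R :=
  sumR n (fun x => F x * Rpower (P x) q) / sumR n (fun x => Rpower (P x) q).

(* Main.v *)
Require Import Defs.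
From Stdlib Require Import Reals Lra Lia.
Open Scope R_scope.

Lemma my_exp_le x y : x <= y -> exp x <= exp y.
Proof. intros H; destruct (Rle_lt_or_eq_dec _ _ H) as [h|h].
 left; apply exp_increasing; exact h. subst; lra. Qed.

Lemma my_ln_le x y : 0 < x -> x <= y -> ln x <= ln y.
Proof. intros H0 H; destruct (Rle_lt_or_eq_dec _ _ H) as [h|h].
 left; apply ln_increasing; assumption. subst; lra. Qed.

Lemma sumR_le n f g : (forall x, (x < n)%nat -> f x <= g x) -> sumR n f <= sumR n g.
Proof. induction n; simpl; intros H. lra.
 assert (sumR n f <= sumR n g) by (apply IHn; intros; apply H; lia).
 assert (f n <= g n) by (apply H; lia). lra. Qed.

Lemma sumR_lin n a b f g : sumR n (fun x => a * f x + b * g x) = a * sumR n f + b * sumR n g.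
Proof. induction n; simpl. ring. rewrite IHn; ring. Qed.

Lemma sumR_pos n f : (0 < n)%nat -> (forall x, (x < n)%nat -> 0 < f x) -> 0 < sumR n f.
Proof. induction n; simpl; intros Hn H. lia.
 destruct n. simpl. specialize (H 0%nat ltac:(lia)). lra.
 assert (0 < sumR (S n) f) by (apply IHn; [lia| intros; apply H; lia]).
 assert (0 < f (S n)) by (apply H; lia). lra. Qed.

Lemma ln_le_minus1 y : 0 < y -> ln y <= y - 1.
Proof. intros. pose proof (exp_ineq1_le (ln y)). rewrite exp_ln in H0 by lra. lra. Qed.

Lemma harmonic n : (1 <= n)%nat -> sumR n (fun k => / INR (S k)) <= 1 + ln (INR n).
Proof.
 induction n; intros Hn. lia.
 destruct n. simpl. rewrite ln_1. lra.
 specialize (IHn ltac:(lia)). change (sumR (S (S n)) (fun k => / INR (S k))) with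
   (sumR (S n) (fun k => / INR (S k)) + / INR (S (S n))).
 assert (Hp : 0 < INR (S n)) by (apply lt_0_INR; lia).
 assert (Hq : INR (S (S n)) = INR (S n) + 1) by (rewrite S_INR; ring).
 assert (ln (INR (S n) / INR (S (S n))) <= INR (S n) / INR (S (S n)) - 1).
 { apply ln_le_minus1. rewrite Hq. apply Rdiv_lt_0_compat; lra. }
 unfold Rdiv in H at 1. rewrite ln_mult, ln_Rinv in H by (try apply Rinv_0_lt_compat; rewrite ?Hq; lra).
 assert (INR (S n) / INR (S (S n)) - 1 = - / INR (S (S n))) by (rewrite Hq; field; lra).
 lra.
Qed.

Lemma conv th u v : 0 <= th <= 1 -> exp (th * u + (1 - th) * v) <= th * exp u + (1 - th) * exp v.
Proof.
 intros Hth. set (m := th * u + (1 - th) * v).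
 assert (E1 : exp u = exp m * exp (u - m)) by (rewrite <- exp_plus; f_equal; ring).
 assert (E2 : exp v = exp m * exp (v - m)) by (rewrite <- exp_plus; f_equal; ring).
 pose proof (exp_ineq1_le (u - m)). pose proof (exp_ineq1_le (v - m)).
 pose proof (exp_pos m).
 assert (th * (exp m * (1 + (u - m))) + (1 - th) * (exp m * (1 + (v - m))) = exp m)
   by (unfold m; ring).
 rewrite E1, E2.
 assert (exp m * (1 + (u - m)) <= exp m * exp (u - m)) by (apply Rmult_le_compat_l; lra).
 assert (exp m * (1 + (v - m)) <= exp m * exp (v - m)) by (apply Rmult_le_compat_l; lra).
 nra.
Qed.

Lemma main_core (n : nat) (P : nat -> R) (G : nat -> nat) (rho q : R)
  (hP : pmf_pos n P) (hG : guessing_function n G) (hrho : 0 < rho)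
  (Hperm : sumR n (fun x => / INR (G x)) = sumR n (fun k => / INR (S k))) :
  Eq_norm n P q (fun x => Rpower (INR (G x)) rho) >=
  Rpower (1 + ln (INR n)) (- rho) *
  (Rpower (sumR n (fun x => Rpower (P x) (q / (1 + rho)))) (1 + rho)
   / sumR n (fun x => Rpower (P x) q)).
Proof.
 destruct hP as [HP Hsum].
 assert (Hn : (0 < n)%nat).
 { destruct n. simpl in Hsum. lra. lia. }
 assert (Hg : forall x, (x < n)%nat -> 1 <= INR (G x)).
 { intros x Hx. destruct hG as [H1 _]. destruct (H1 x Hx). apply (le_INR 1). exact H. }
 unfold Eq_norm.
 set (S := sumR n (fun x => Rpower (P x) (q / (1 + rho)))).
 set (T := sumR n (fun x => Rpower (INR (G x)) rho * Rpower (P x) q)).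
 set (A := sumR n (fun x => Rpower (P x) q)).
 set (H := sumR n (fun x => / INR (G x))).
 assert (HA : 0 < A) by (apply sumR_pos; auto; intros; unfold Rpower; apply exp_pos).
 assert (HT : 0 < T).
 { apply sumR_pos; auto; intros; unfold Rpower; apply Rmult_lt_0_compat; apply exp_pos. }
 assert (HH : 0 < H).
 { apply sumR_pos; auto; intros. apply Rinv_0_lt_compat. specialize (Hg x H0). lra. }
 assert (HS : 0 < S) by (apply sumR_pos; auto; intros; unfold Rpower; apply exp_pos).
 assert (Hharm : H <= 1 + ln (INR n)).
 { unfold H. rewrite Hperm. apply harmonic. lia. }
 set (t := (ln T - ln H) / (1 + rho)).
 set (th := rho / (1 + rho)).
 set (m := (ln T + rho * ln H) / (1 + rho)).
 assert (Hth : 0 <= th <= 1).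
 { unfold th; split. apply Rlt_le, Rdiv_lt_0_compat; lra.
   apply Rmult_le_reg_r with (1 + rho). lra. field_simplify; lra. }
 assert (Hpt : forall x, (x < n)%nat ->
   Rpower (P x) (q / (1 + rho)) <=
   (th * exp t) * / INR (G x) + ((1 - th) * exp (- rho * t)) * (Rpower (INR (G x)) rho * Rpower (P x) q)).
 { intros x Hx. specialize (Hg x Hx). specialize (HP x Hx).
   set (u := t - ln (INR (G x))).
   set (v := - rho * t + rho * ln (INR (G x)) + q * ln (P x)).
   assert (Eu : exp u = exp t * / INR (G x)).
   { unfold u. unfold Rminus. rewrite exp_plus, exp_Ropp, exp_ln by lra. reflexivity. }
   assert (Ev : exp v = exp (- rho * t) * (Rpower (INR (G x)) rho * Rpower (P x) q)).
   { unfold v, Rpower. rewrite !exp_plus. ring. }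
   assert (Ew : th * u + (1 - th) * v = q / (1 + rho) * ln (P x)).
   { unfold u, v, th. field. lra. }
   unfold Rpower at 1. rewrite <- Ew.
   eapply Rle_trans. apply conv; exact Hth. rewrite Eu, Ev. right; ring. }
 assert (HS1 : S <= (th * exp t) * H + ((1 - th) * exp (- rho * t)) * T).
 { unfold S, H, T. rewrite <- sumR_lin. apply sumR_le. exact Hpt. }
 assert (E1 : exp t * H = exp m).
 { rewrite <- (exp_ln H) at 1 by lra. rewrite <- exp_plus. f_equal. unfold t, m. field. lra. }
 assert (E2 : exp (- rho * t) * T = exp m).
 { rewrite <- (exp_ln T) at 1 by lra. rewrite <- exp_plus. f_equal. unfold t, m. field. lra. }
 assert (HS2 : S <= exp m).
 { replace (exp m) with (th * (exp t * H) + (1 - th) * (exp (- rho * t) * T))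
     by (rewrite E1, E2; ring). lra. }
 assert (HS3 : Rpower S (1 + rho) <= T * Rpower H rho).
 { unfold Rpower. rewrite <- (exp_ln T) at 1 by lra. rewrite <- exp_plus.
   apply my_exp_le.
   assert (ln S <= m) by (rewrite <- (ln_exp m); apply my_ln_le; lra).
   replace (ln T + rho * ln H) with ((1 + rho) * m) by (unfold m; field; lra).
   apply Rmult_le_compat_l; lra. }
 assert (HR : Rpower H rho <= Rpower (1 + ln (INR n)) rho).
 { apply Rle_Rpower_l; lra. }
 assert (HR0 : 0 < Rpower (1 + ln (INR n)) rho) by (unfold Rpower; apply exp_pos).
 rewrite Rpower_Ropp. apply Rle_ge.
 set (R0 := Rpower (1 + ln (INR n)) rho) in *.
 assert (Rpower S (1 + rho) <= T * R0).
 { eapply Rle_trans. exact HS3. apply Rmult_le_compat_l; lra. }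
 apply Rle_trans with (/ R0 * (T * R0 / A)).
 { apply Rmult_le_compat_l. left; apply Rinv_0_lt_compat; lra.
   unfold Rdiv. apply Rmult_le_compat_r. left; apply Rinv_0_lt_compat; lra. lra. }
 right. field. split; lra.
Qed.

From HB Require Import structures.
From mathcomp Require Import all_boot zify.
Open Scope R_scope.

HB.instance Definition Rplus_monoid :=
  Monoid.isComLaw.Build R 0 Rplus (fun a b c => esym (Rplus_assoc a b c)) Rplus_comm Rplus_0_l.

Lemma sumR_big n f : sumR n f = \big[Rplus/0]_(i < n) f (nat_of_ord i).
Proof.
elim: n => [|n IH]; first by rewrite big_ord0.
by rewrite big_ord_recr /= IH.
Qed.

Lemma sumR_perm n G (f : nat -> R) : guessing_function n G ->
  sumR n (fun x => f (G x)) = sumR n (fun k => f (S k)).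
Proof.
move=> [HG1 HG2].
have lo : forall i : 'I_n, (nat_of_ord i < n)%coq_nat by move=> i; apply/ltP; exact: ltn_ord.
have B : forall i : 'I_n, ((0 < G i) && (G i <= n))%N.
  move=> i; have [h1 h2] := HG1 i (lo i).
  by apply/andP; split; apply/leP.
have hlt : forall i : 'I_n, (G i - 1 < n)%N.
  move=> i; move/andP: (B i) => [h1 h2]; lia.
pose h := fun i : 'I_n => Ordinal (hlt i).
have hinj : injective h.
  move=> i j /(congr1 val) /= e; apply: val_inj => /=.
  move/andP: (B i) => [a1 a2]; move/andP: (B j) => [b1 b2].
  apply: HG2; try exact: lo. lia.
rewrite !sumR_big [RHS](reindex_inj hinj) /=.
apply: eq_bigr => i _ /=.
move/andP: (B i) => [a1 a2]. f_equal. lia.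
Qed.

Theorem theorem1 (n : nat) (P : nat -> R) (G : nat -> nat) (rho q : R)
  (hP : pmf_pos n P) (hG : guessing_function n G) (hrho : 0 < rho) :
  Eq_norm n P q (fun x => Rpower (INR (G x)) rho) >=
  Rpower (1 + ln (INR n)) (- rho) *
  (Rpower (sumR n (fun x => Rpower (P x) (q / (1 + rho)))) (1 + rho)
   / sumR n (fun x => Rpower (P x) q)).
Proof.
  apply: main_core => //.
  exact: (sumR_perm n G (fun k => / INR k) hG).
Qed.
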